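(* Let $\mathcal{Y}=\mathbb{R}$, $K\ge1$, $\alpha\in(0,1)$, let $(q_1,\dots,q_K)$ be a probability vector, and let $n_1,\dots,n_K\ge0$ be fixed integers with $n=\sum_k n_k$. For distributions $\Pi_1,\dots,\Pi_K$ on $\mathcal{X}^1\times\mathbb{R}$, consider calibration data $(X_1,Y_1),\dots,(X_n,Y_n)$ generated independently with, for each $k$ and each $i\in\{n_1+\dots+n_{k-1}+1,\dots,n_1+\dots+n_k\}$, $X_i^0=k$ and $(X_i^1,Y_i)\sim\Pi_k$, and an independent test point $(X_{n+1},Y_{n+1})$ with $\mathbb{P}\{X^0_{n+1}=k\}=q_k$ and $(X^1_{n+1},Y_{n+1})\mid X^0_{n+1}=k\sim\Pi_k$. Let $\widehat{C}_n$ be a prediction set procedure (a set $\widehat{C}_n(x)\subseteq\mathbb{R}$ constructed from the calibration data for each $x$) satisfying the distribution-free coverage guarantee $\mathbb{P}\{Y_{n+1}\in\widehat{C}_n(X_{n+1})\}\ge1-\alpha$ under this data-generating model for every choice of $\Pi_1,\dots,\Pi_K$. If $\sum_{k:\,n_k=0}q_k>\alpha$, then (for any $\Pi_1,\dots,\Pi_K$) $\mathbb{E}[\textnormal{Leb}(\widehat{C}_n(X_{n+1}))]=\infty$.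
   Context: Features are $x=(x^0,x^1)\in[K]\times\mathcal{X}^1$ with $x^0$ the group label. $\textnormal{Leb}$ denotes Lebesgue measure on $\mathbb{R}$. *)

(* Defs.v *)
From HB Require Import structures.
From mathcomp Require Import all_boot all_order all_algebra.
From mathcomp Require Import all_classical all_reals all_analysis.
Import Order.TTheory GRing.Theory Num.Theory.
Import numFieldNormedType.Exports.

Set Implicit Arguments.
Unset Strict Implicit.
Unset Printing Implicit Defensive.

Local Open Scope classical_set_scope.
Local Open Scope ring_scope.

Section conformal_model.
Variables (R : realType) (d1 : measure_display) (X1 : measurableType d1).
Variables (K : nat) (nk : 'I_K -> nat).

Definition ncal : nat := (\sum_(k < K) nk k)%N.

(** calibration index i (0-based) belongs to group k (0-based) iff
    n_1 + ... + n_{k-1} <= i < n_1 + ... + n_k *)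
Definition in_group (k : 'I_K) (i : nat) : bool :=
  ((\sum_(j < K | (j < k)%N) nk j <= i)
   && (i < \sum_(j < K | (j <= k)%N) nk j))%N.

Lemma K_gt0_of_cal (i : 'I_ncal) : (0 < K)%N.
Proof.
case: i => i; rewrite /ncal; case: K nk => [|K'] f //.
by rewrite big_ord0.
Qed.

(** the (deterministic) group label X^0_i of the calibration point i; the
    default branch is never taken since the groups partition [0, n) *)
Definition group_of (i : 'I_ncal) : 'I_K :=
  match [pick k | in_group k i] with
  | Some k => k
  | None => Ordinal (K_gt0_of_cal i)
  end.

(** a full calibration data set ((X_i^0, X_i^1), Y_i)_{i} *)
Definition caldata := 'I_ncal -> ('I_K * X1) * R.

Definition procedure := caldata -> ('I_K * X1) -> set R.

(** calibration data as a function of the (X^1_i, Y_i)'s, group labels being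
    fixed by the design *)
Definition lift_data (z : 'I_ncal -> X1 * R) : caldata :=
  fun i => ((group_of i, (z i).1), (z i).2).

(** joint measurability of the procedure (implicit regularity assumption) *)
Definition procedure_measurable (C : procedure) : Prop :=
  forall k : 'I_K,
    measurable [set p : (ncal.-tuple (X1 * R)%type * (X1 * R)%type)%type |
                C (lift_data (fun i => tnth p.1 i)) (k, p.2.1) p.2.2].

Section on_space.
Variables (dO : measure_display) (O : measurableType dO) (P : probability O R).

(** mutual independence of the n calibration pairs Z_i = (X^1_i, Y_i) and of
    the test point (X^0_{n+1}, (X^1_{n+1}, Y_{n+1})) = (G, Z0): product rule on
    all (generating) measurable rectangles *)
Definition mutually_independent (Z : 'I_ncal -> O -> X1 * R)
    (G : O -> 'I_K) (Z0 : O -> X1 * R) : Prop :=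
  forall (A : 'I_ncal -> set (X1 * R)%type) (S : set 'I_K) (B : set (X1 * R)%type),
    (forall i, measurable (A i)) -> measurable B ->
    P ((\bigcap_(i in [set: 'I_ncal]) (Z i @^-1` A i))
        `&` (G @^-1` S `&` Z0 @^-1` B))
    = ((\prod_(i < ncal) P (Z i @^-1` A i)) * P (G @^-1` S `&` Z0 @^-1` B))%E.

Definition data_model (Pi : 'I_K -> probability (X1 * R)%type R) (q : 'I_K -> R)
    (Z : 'I_ncal -> O -> X1 * R) (G : O -> 'I_K) (Z0 : O -> X1 * R) : Prop :=
  [/\ (forall i, measurable_fun setT (Z i)),
      (forall k, measurable (G @^-1` [set k])) /\ measurable_fun setT Z0,
      (forall i A, measurable A -> P (Z i @^-1` A) = Pi (group_of i) A),
      (forall k B, measurable B ->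
         P (G @^-1` [set k] `&` Z0 @^-1` B) = ((q k)%:E * Pi k B)%E)
    & mutually_independent Z G Z0].

End on_space.
End conformal_model.

(* Main.v *)
Require Import Defs.
From HB Require Import structures.
From mathcomp Require Import all_boot all_order all_algebra.
From mathcomp Require Import all_classical all_reals all_analysis.
From mathcomp Require Import lra.
Import Order.TTheory GRing.Theory Num.Theory.
Import numFieldNormedType.Exports.
Local Open Scope classical_set_scope.
Local Open Scope ring_scope.

Lemma lebT (R : realType) : (lebesgue_measure [set: R] = +oo)%E.
Proof.
have := lebesgue_measure_itv (`]-oo, +oo[ : interval R).
by rewrite set_itvNyy /=.
Qed.

Section grp.
Variables (K : nat) (nk : 'I_K -> nat).

Lemma sum_lt_succ {m : nat} (Hm : (m < K)%N) :
  (\sum_(j < K | (j < m.+1)%N) nk j = \sum_(j < K | (j < m)%N) nk j + nk (Ordinal Hm))%N.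
Proof.
rewrite (bigD1 (Ordinal Hm)) //= addnC; congr (_ + _)%N.
by apply: eq_bigl => j; rewrite ltnS (ltn_neqAle j m) -val_eqE /= andbC.
Qed.

Lemma in_group_ex (i : nat) : (i < ncal nk)%N -> exists k, in_group nk k i.
Proof.
move=> Hi.
suff H : forall m, (m <= K)%N -> (i < \sum_(j < K | (j < m)%N) nk j)%N -> exists k, in_group nk k i.
  apply: (H K (leqnn K)).
  by rewrite (eq_bigl xpredT) // => j; rewrite ltn_ord.
elim=> [|m IH] HmK.
  by rewrite big_pred0 // => j; rewrite ltn0.
rewrite (sum_lt_succ HmK) => Hlt.
case: (ltnP i (\sum_(j < K | (j < m)%N) nk j)) => Hc.
  exact: IH (ltnW HmK) Hc.
exists (Ordinal HmK); rewrite /in_group /=; apply/andP; split=> //.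
by rewrite (eq_bigl (fun j : 'I_K => (j < m.+1)%N)) ?sum_lt_succ // => j; rewrite ltnS.
Qed.

Lemma group_of_nonempty (i : 'I_(ncal nk)) : nk (group_of i) != 0%N.
Proof.
rewrite /group_of; case: pickP => [k Hk|Hn].
  move: Hk; rewrite /in_group => /andP[H1 H2].
  have Hk : (k < K)%N := ltn_ord k.
  move: H2; rewrite (eq_bigl (fun j : 'I_K => (j < k.+1)%N)); last by move=> j; rewrite ltnS.
  rewrite (sum_lt_succ Hk) => H2.
  have Ek : Ordinal Hk = k by apply: val_inj.
  rewrite Ek in H2.
  apply/eqP => H0; move: H2; rewrite H0 addn0 => H2.
  by move: (leq_trans H2 H1); rewrite ltnn.
have [k Hk] := in_group_ex _ (ltn_ord i).
by move: (Hn k); rewrite Hk.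
Qed.
End grp.

Section phi.
Variables (R : realType) (d1 : measure_display) (X1 : measurableType d1).
Variables (K : nat) (nk : 'I_K -> nat) (y : R) (k : 'I_K).

Definition phik (p : X1 * R) : X1 * R := if nk k == 0%N then (p.1, y) else p.

Lemma measurable_phik : measurable_fun setT phik.
Proof.
rewrite /phik; case: (nk k == 0%N); last exact: measurable_id.
by apply: measurable_fun_pair => //; exact: measurable_cst.
Qed.

End phi.
HB.instance Definition _ (R : realType) (d1 : measure_display) (X1 : measurableType d1)
  (K : nat) (nk : 'I_K -> nat) (y : R) (k : 'I_K) :=
  isMeasurableFun.Build _ _ _ _ (@phik R d1 X1 K nk y k) (@measurable_phik R d1 X1 K nk y k).

Definition Pi2 (R : realType) (d1 : measure_display) (X1 : measurableType d1)
  (K : nat) (nk : 'I_K -> nat) (y : R) (Pi : 'I_K -> probability (X1 * R)%type R) :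
  'I_K -> probability (X1 * R)%type R :=
  fun k => distribution (Pi k) (@phik R d1 X1 K nk y k).

Section meas.
Variables (R : realType) (d1 : measure_display) (X1 : measurableType d1).
Variables (K : nat) (nk : 'I_K -> nat) (C : procedure R X1 nk).

Lemma meas_covset (dT : measure_display) (T : measurableType dT)
  (Zs : 'I_(ncal nk) -> T -> X1 * R) (Gs : T -> 'I_K) (V : T -> X1 * R) :
  procedure_measurable C -> (forall i, measurable_fun setT (Zs i)) ->
  (forall k, measurable (Gs @^-1` [set k])) -> measurable_fun setT V ->
  measurable [set t | C (lift_data (fun i => Zs i t)) (Gs t, (V t).1) (V t).2].
Proof.
move=> mC mZ mG mV.
pose tup t : (ncal nk).-tuple (X1 * R)%type := [tuple Zs i t | i < ncal nk].
have mtup : measurable_fun setT tup.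
  apply/measurable_fun_tnthP => i.
  rewrite /tup /comp /=.
  by under eq_fun do rewrite tnth_mktuple; exact: mZ.
have -> : [set t | C (lift_data (fun i => Zs i t)) (Gs t, (V t).1) (V t).2] =
  \bigcup_(k in [set: 'I_K]) (Gs @^-1` [set k] `&`
     (fun t => (tup t, V t)) @^-1`
     [set p : ((ncal nk).-tuple (X1 * R)%type * (X1 * R)%type)%type |
                C (lift_data (fun i => tnth p.1 i)) (k, p.2.1) p.2.2]).
  apply/seteqP; split => t /=.
    move=> Ht; exists (Gs t) => //=; split => //.
    by under eq_fun do rewrite tnth_mktuple.
  move=> [k _ [/= <-]].
  by under eq_fun do rewrite tnth_mktuple.
apply: fin_bigcup_measurable; first exact: finite_finset.
move=> k _; apply: measurableI; first exact: mG.
have mp : measurable_fun setT (fun t => (tup t, V t)).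
  exact: measurable_fun_pair.
by rewrite -[X in measurable X]setTI; apply: mp => //; exact: mC.
Qed.
End meas.

Lemma Pi2E (R : realType) (d1 : measure_display) (X1 : measurableType d1)
  (K : nat) (nk : 'I_K -> nat) (y : R) (Pi : 'I_K -> probability (X1 * R)%type R) k B :
  Pi2 R d1 X1 K nk y Pi k B = Pi k (@phik R d1 X1 K nk y k @^-1` B).
Proof. by []. Qed.

Lemma bigsetU_memP (T : Type) (n : nat) (P : pred 'I_n) (F : 'I_n -> set T) (x : T) :
  (\big[setU/set0]_(i < n | P i) F i) x <-> exists i, P i /\ F i x.
Proof.
rewrite big_mkcond.
have H : forall s : seq 'I_n,
  (\big[setU/set0]_(i <- s) (if P i then F i else set0)) x <->
  exists i, i \in s /\ P i /\ F i x.
  elim=> [|a s IH]; rewrite ?big_nil ?big_cons.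
    by split => // -[i []].
  split.
    case=> [Ha|/IH [i [si Hi]]].
      by exists a; move: Ha; case: (P a) => // Ha; rewrite mem_head.
    by exists i; rewrite in_cons si orbT.
  move=> [i]; rewrite in_cons => -[/orP[/eqP ->|si] [Pi Fi]].
    by left; rewrite Pi.
  by right; apply/IH; exists i.
split; first by move=> /H [i [_ Hi]]; exists i.
by move=> [i Hi]; apply/H; exists i; rewrite mem_index_enum.
Qed.

Theorem proposition1 (R : realType) (d1 : measure_display) (X1 : measurableType d1)
    (K : nat) (nk : 'I_K -> nat) (alpha : R) (q : 'I_K -> R)
    (C : procedure R X1 nk) :
  (0 < K)%N ->
  0 < alpha < 1 ->
  (forall k, 0 <= q k) -> \sum_(k < K) q k = 1 ->
  procedure_measurable C ->
  (forall (Pi : 'I_K -> probability (X1 * R)%type R)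
          (dO : measure_display) (O : measurableType dO) (P : probability O R)
          (Z : 'I_(ncal nk) -> O -> X1 * R) (G : O -> 'I_K) (Z0 : O -> X1 * R),
      data_model P Pi q Z G Z0 ->
      ((1 - alpha)%:E <=
         P [set w | C (lift_data (fun i => Z i w)) (G w, (Z0 w).1) (Z0 w).2])%E) ->
  alpha < \sum_(k < K | nk k == 0%N) q k ->
  forall (Pi : 'I_K -> probability (X1 * R)%type R)
         (dO : measure_display) (O : measurableType dO) (P : probability O R)
         (Z : 'I_(ncal nk) -> O -> X1 * R) (G : O -> 'I_K) (Z0 : O -> X1 * R),
    data_model P Pi q Z G Z0 ->
    (\int[P]_w lebesgue_measure (C (lift_data (fun i => Z i w)) (G w, (Z0 w).1))
       = +oo)%E.
Proof.
move=> K0 /andP[a0 a1] q0 q1 mC cov asig Pi dO O P Z G Z0 DM.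
have DM' := DM; case: DM' => mZ [mG mZ0] PZ PGZ0 indep.
set sig := \sum_(k < K | nk k == 0%N) q k.
pose F : set (O * R)%type :=
  [set wy | C (lift_data (fun i => Z i wy.1)) (G wy.1, (Z0 wy.1).1) wy.2].
have mF : measurable F.
  apply: (@meas_covset R d1 X1 K nk C _ (O * R)%type (fun i wy => Z i wy.1) (fun wy => G wy.1)
                      (fun wy => ((Z0 wy.1).1, wy.2))) => //.
  - by move=> i; apply: measurableT_comp => //; exact: mZ.
  - move=> k; rewrite -[X in measurable X]setTI.
    have -> : (fun wy : O * R => G wy.1) @^-1` [set k] = (G @^-1` [set k]) `*` setT.
      by apply/seteqP; split => wy /=; [move=> ->|case].
    by rewrite setTI; apply: measurableX.
  - apply: measurable_fun_pair => //.
    by apply: measurableT_comp => //; apply: measurableT_comp => //.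
pose g y := P (ysection F y).
have Ifub : (\int[P]_w lebesgue_measure (C (lift_data (fun i => Z i w)) (G w, (Z0 w).1))
   = \int[lebesgue_measure]_y g y)%E.
  have := indic_fubini_tonelli P lebesgue_measure mF.
  rewrite indic_fubini_tonelli_FE // indic_fubini_tonelli_GE // => <-.
  apply: eq_integral => w _ /=; congr (lebesgue_measure _).
  by apply/seteqP; split => t /=; rewrite /xsection /= inE.
have mg := measurable_fun_ysection P mF.
rewrite -/(P \o ysection F) -/g in mg.
apply: contrapT => HI.
have sa0 : 0 < sig - alpha by rewrite subr_gt0.
have [y gy] : exists y, (g y < (sig - alpha)%:E)%E.
  apply: contrapT => Hn; apply: HI; rewrite Ifub.
  have Hge : forall y, ((sig - alpha)%:E <= g y)%E.
    by move=> y; rewrite leNgt; apply/negP => h; apply: Hn; exists y.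
  apply/eqP; rewrite eq_le leey /=.
  have := @ge0_le_integral _ _ _ lebesgue_measure setT measurableT
    (cst (sig - alpha)%:E) g.
  rewrite integral_cst //.
  match goal with |- context [((sig - alpha)%:E * ?L)%E] =>
    have -> : L = +oo%E by exact: lebT end.
  rewrite muleC gt0_mulye ?lte_fin //; apply => //.
  by move=> x _; rewrite lee_fin ltW.

pose Nn : set 'I_K := [set k | nk k != 0%N].
pose En : set 'I_K := [set k | nk k == 0%N].
pose phy : X1 * R -> X1 * R := fun p => (p.1, y).
have mphy : measurable_fun setT phy.
  by apply: measurable_fun_pair => //; exact: measurable_cst.
pose Z2 w := @phik R d1 X1 K nk y (G w) (Z0 w).
have mGS : forall S : set 'I_K, measurable (G @^-1` S).
  move=> S.
  have -> : G @^-1` S = \bigcup_(k in S) (G @^-1` [set k]).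
    by apply/seteqP; split => w /=; [move=> Sw; exists (G w)|case=> k Sk /= ->].
  apply: fin_bigcup_measurable; first exact: finite_finset.
  by move=> k _; exact: mG.
have mpre : forall (f : X1 * R -> X1 * R) B, measurable_fun setT f -> measurable B ->
    measurable (f @^-1` B).
  by move=> f B mf mB; rewrite -[X in measurable X]setTI; exact: mf.
have mZ0pre : forall B, measurable B -> measurable (Z0 @^-1` B).
  by move=> B mB; rewrite -[X in measurable X]setTI; exact: mZ0.
have E1 : forall S B, G @^-1` S `&` Z2 @^-1` B =
    (G @^-1` (S `&` Nn) `&` Z0 @^-1` B) `|` (G @^-1` (S `&` En) `&` Z0 @^-1` (phy @^-1` B)).
  move=> S B; apply/seteqP; split => w /=; rewrite /Z2 /phik.
    by case: eqP => H [Sw Bw]; [right|left]; do ?split => //; apply/eqP.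
  case=> -[[Sw]]; rewrite /Nn /En /= => /eqP H Bw.
    by case: eqP.
  by rewrite H eqxx.
have mZ2 : measurable_fun setT Z2.
  move=> _ B mB; rewrite setTI.
  have := E1 setT B; rewrite preimage_setT setTI => ->.
  apply: measurableU; apply: measurableI => //; [exact: mZ0pre|].
  by apply: mZ0pre; exact: mpre.
have disj : forall S B, (G @^-1` (S `&` Nn) `&` Z0 @^-1` B) `&`
     (G @^-1` (S `&` En) `&` Z0 @^-1` (phy @^-1` B)) = set0.
  move=> S B; apply/seteqP; split => w //= [[[_ H1] _] [[_ H2] _]].
  by move: H1 H2; rewrite /Nn /En /= => /negP.
have DM2 : data_model P (Pi2 R d1 X1 K nk y Pi) q Z G Z2.
  split => //.
  - move=> i A mA; rewrite PZ // Pi2E /phik.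
    by rewrite (negbTE (@group_of_nonempty K nk i)).
  - move=> k B mB.
    have -> : G @^-1` [set k] `&` Z2 @^-1` B =
        G @^-1` [set k] `&` Z0 @^-1` (@phik R d1 X1 K nk y k @^-1` B).
      by apply/seteqP; split => w /= [Hk]; rewrite /Z2 Hk.
    rewrite Pi2E PGZ0 //; apply: mpre => //; exact: measurable_phik.
  - move=> A S B mA mB.
    have mAc : measurable (\bigcap_(i in [set: 'I_(ncal nk)]) (Z i @^-1` A i)).
      apply: fin_bigcap_measurable; first exact: finite_finset.
      by move=> i _; rewrite -[X in measurable X]setTI; exact: mZ.
    have mU1 : measurable (G @^-1` (S `&` Nn) `&` Z0 @^-1` B).
      by apply: measurableI => //; exact: mZ0pre.
    have mU2 : measurable (G @^-1` (S `&` En) `&` Z0 @^-1` (phy @^-1` B)).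
      by apply: measurableI => //; apply: mZ0pre; exact: mpre.
    rewrite E1 setIUr measureU; last 3 first.
    + exact: measurableI.
    + exact: measurableI.
    + by rewrite setIACA -setIA disj !setI0.
    have I1 := indep A (S `&` Nn) B mA mB.
    have I2 := indep A (S `&` En) (phy @^-1` B) mA (mpre _ _ mphy mB).
    apply: (@eq_trans _ _ ((\prod_(i < ncal nk) P (Z i @^-1` A i)) *
       P (G @^-1` (S `&` Nn) `&` Z0 @^-1` B) +
       (\prod_(i < ncal nk) P (Z i @^-1` A i)) *
       P (G @^-1` (S `&` En) `&` Z0 @^-1` (phy @^-1` B)))%E).
      by congr (_ + _)%E; [exact: I1|exact: I2].
    rewrite -ge0_muleDr //; congr (_ * _)%E; symmetry; exact: measureU.
have cv := cov _ _ _ _ _ _ _ DM2.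
pose W := [set w | C (lift_data (fun i => Z i w)) (G w, (Z2 w).1) (Z2 w).2].
have mW : measurable W.
  apply: (@meas_covset R d1 X1 K nk C _ O Z G Z2) => //.
have mY : measurable (ysection F y) by exact: measurable_ysection.
have WU : W `<=` G @^-1` Nn `|` ysection F y.
  move=> w; rewrite /W /Z2 /phik /=.
  case: eqP => H Cw; [right|left] => //=; last by apply/eqP.
  by rewrite /ysection /= inE.
have PGk : forall k, P (G @^-1` [set k]) = (q k)%:E.
  move=> k; have := PGZ0 k [set: X1 * R] measurableT; rewrite preimage_setT setIT => ->.
  by rewrite probability_setT mule1.
have PEn : P (G @^-1` En) = sig%:E.
  have -> : G @^-1` En = \big[setU/set0]_(k < K | nk k == 0%N) (G @^-1` [set k]).
    apply/seteqP; split => w.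
      by move=> Hw; apply/bigsetU_memP; exists (G w); split.
    by move/bigsetU_memP => [k [Hk /= ->]].
  rewrite measure_bigsetU_ord_cond.
  - by rewrite (eq_bigr (fun k => (q k)%:E)) ?sumEFin // => k _; exact: PGk.
  - by move=> k _; exact: mG.
  - apply/trivIsetP => i j _ _ ij; apply/seteqP; split => w //= [-> H].
    by move: ij; rewrite H eqxx.
have PNn : P (G @^-1` Nn) = (1 - sig)%:E.
  have -> : G @^-1` Nn = ~` (G @^-1` En).
    by apply/seteqP; split => w /=; rewrite /Nn /En /=; [move=> /negP|move=> /negP].
  by rewrite probability_setC // PEn.
have : (P W <= (1 - sig)%:E + g y)%E.
  rewrite -PNn; apply: le_trans (measureU2 _ _ _) => //.
  by apply: le_measure => //; rewrite inE //; exact: measurableU.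
have gfin : g y = (fine (g y))%:E.
  rewrite fineK // ge0_fin_numE //; apply: (le_lt_trans (probability_le1 _ _)) => //.
  by rewrite ltey.
rewrite gfin in gy *; rewrite lte_fin in gy.
move=> H; have := le_trans cv H; rewrite -EFinD lee_fin => H2.
have : (1 - alpha < 1 - alpha) by apply: (le_lt_trans H2); lra.
by rewrite ltxx.
Qed.
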